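(* Let $(G,k)$ be an instance and let $v_1,v_2,v_3,v_4$ be four distinct vertices such that $v_1$ is adjacent to each of $v_2,v_3,v_4$, no two of $v_2,v_3,v_4$ are adjacent, $d(v_1)=3$, and $d(v_4)=1$. Then $(G,k)$ is a yes-instance if and only if $(G-v_4,k)$ is a yes-instance.
   Context: Graphs are undirected, without self-loops, possibly with multi-edges; $d(v)$ is the number of edges incident to $v$ (counted with multiplicity). A vertex set induces a clique if between any two distinct vertices there is exactly one edge, and a tree if it is connected and acyclic (two parallel edges form a cycle). A feasible solution for $(G,k)$ is $X\subseteq V$, $|X|\le k$, with every connected component of $G-X$ a clique or a tree; $(G,k)$ is a yes-instance if one exists. *)

(* Defs.v *)
From mathcomp Require Import all_boot.
Set Implicit Arguments. Unset Strict Implicit. Unset Printing Implicit Defensive.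

(* A finite multigraph on vertex type V: m x y = number of edges between x and y. *)
Definition multigraph (V : finType) (m : V -> V -> nat) : Prop :=
  (forall x y, m x y = m y x) /\ (forall x, m x x = 0).

Definition deg (V : finType) (m : V -> V -> nat) (v : V) : nat := \sum_(u : V) m v u.

Definition adjIn (V : finType) (m : V -> V -> nat) (U : {set V}) : rel V :=
  fun x y => [&& x \in U, y \in U & 0 < m x y].

Definition compIn (V : finType) (m : V -> V -> nat) (U : {set V}) (x : V) : {set V} :=
  [set y | connect (adjIn m U) x y].

Definition is_clique (V : finType) (m : V -> V -> nat) (C : {set V}) : Prop :=
  forall x y, x \in C -> y \in C -> x != y -> m x y = 1.

(* C induces an acyclic graph: no two parallel edges (a 2-cycle), and no
   cycle through >= 3 distinct vertices of C *)
Definition is_acyclic (V : finType) (m : V -> V -> nat) (C : {set V}) : Prop :=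
  (forall x y, x \in C -> y \in C -> m x y <= 1) /\
  (forall s : seq V, uniq s -> 3 <= size s -> all (fun x => x \in C) s ->
      ~ cycle (fun x y => 0 < m x y) s).

Definition is_connected_set (V : finType) (m : V -> V -> nat) (C : {set V}) : Prop :=
  forall x y, x \in C -> y \in C -> connect (adjIn m C) x y.

Definition is_tree (V : finType) (m : V -> V -> nat) (C : {set V}) : Prop :=
  is_connected_set m C /\ is_acyclic m C.

(* The instance (G[U], k), where the graph is the subgraph induced on U. *)
Definition feasible (V : finType) (m : V -> V -> nat) (U : {set V}) (k : nat)
    (X : {set V}) : Prop :=
  X \subset U /\ #|X| <= k /\
  forall x, x \in U :\: X ->
    is_clique m (compIn m (U :\: X) x) \/ is_tree m (compIn m (U :\: X) x).

Definition yes_instance (V : finType) (m : V -> V -> nat) (U : {set V}) (k : nat) : Prop :=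
  exists X, feasible m U k X.

(* Main.v *)
Require Import Defs.
From mathcomp Require Import all_boot.
From mathcomp Require Import zify.
Set Implicit Arguments. Unset Strict Implicit. Unset Printing Implicit Defensive.

Lemma adjIn_sym (V : finType) (m : V -> V -> nat) (U : {set V}) :
  (forall x y, m x y = m y x) -> symmetric (adjIn m U).
Proof. move=> ms x y; rewrite /adjIn ms; by case: (x \in U); case: (y \in U). Qed.

Lemma comp_path (V : finType) (m : V -> V -> nat) (U : {set V}) x p a :
  connect (adjIn m U) x a -> path (adjIn m U) a p ->
  path (adjIn m (compIn m U x)) a p.
Proof.
elim: p a => [|b p IH] a //= Hxa /andP[Hab Hp].
have Hxb : connect (adjIn m U) x b := connect_trans Hxa (connect1 Hab).
rewrite IH // andbT /adjIn !inE Hxa Hxb /=.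
by move: Hab; rewrite /adjIn => /and3P[].
Qed.

Lemma comp_connect_x (V : finType) (m : V -> V -> nat) (U : {set V}) x y :
  connect (adjIn m U) x y -> connect (adjIn m (compIn m U x)) x y.
Proof.
move=> /connectP[p Hp ->]; apply/connectP; exists p => //.
exact: comp_path (connect0 _ _) Hp.
Qed.

Lemma comp_connected (V : finType) (m : V -> V -> nat) (U : {set V}) x :
  (forall a b, m a b = m b a) -> is_connected_set m (compIn m U x).
Proof.
move=> ms y z; rewrite !inE => Hy Hz.
have S := sym_connect_sym (adjIn_sym (compIn m U x) ms).
apply: connect_trans (comp_connect_x Hz).
rewrite S; exact: comp_connect_x.
Qed.

Lemma connect_map (T : finType) (e e' : rel T) (f : T -> T) :
  (forall a b, e a b -> (f a == f b) || e' (f a) (f b)) ->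
  forall a b, connect e a b -> connect e' (f a) (f b).
Proof.
move=> H a b /connectP[p]; elim: p a => [|c p IH] a /=; first by move=> _ ->.
move=> /andP[Hac Hp] Hb; apply: connect_trans (IH c Hp Hb).
by case/orP: (H _ _ Hac) => [/eqP->|]; [exact: connect0 | exact: connect1].
Qed.

Lemma connect_mono (T : finType) (e e' : rel T) :
  subrel e e' -> forall a b, connect e a b -> connect e' a b.
Proof. move=> H a b; apply: connect_sub => x y /H; exact: connect1. Qed.

Lemma comp_sub (V : finType) (m : V -> V -> nat) (W W' : {set V}) x :
  W' \subset W -> compIn m W' x \subset compIn m W x.
Proof.
move=> sW; apply/subsetP => y; rewrite !inE; apply: connect_mono => a b.
by rewrite /adjIn => /and3P[/(subsetP sW)-> /(subsetP sW)-> ->].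
Qed.

Lemma acyc_sub (V : finType) (m : V -> V -> nat) (C C' : {set V}) :
  C' \subset C -> is_acyclic m C -> is_acyclic m C'.
Proof.
move=> sC [H1 H2]; split.
  by move=> x y /(subsetP sC) Hx /(subsetP sC) Hy; apply: H1.
move=> s us ss al; apply: H2 => //; apply/allP => z /(allP al); exact: (subsetP sC).
Qed.

Lemma hered (V : finType) (m : V -> V -> nat) (W W' : {set V}) x :
  (forall a b, m a b = m b a) -> W' \subset W ->
  is_clique m (compIn m W x) \/ is_tree m (compIn m W x) ->
  is_clique m (compIn m W' x) \/ is_tree m (compIn m W' x).
Proof.
move=> ms sW H; have sC := comp_sub m x sW.
case: H => [Hc|[_ Ha]]; [left|right].
  by move=> a b /(subsetP sC) Ha /(subsetP sC) Hb; apply: Hc.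
split; [exact: comp_connected | exact: acyc_sub sC Ha].
Qed.

Lemma deg_ge1 (V : finType) (m : V -> V -> nat) v a : m v a <= deg m v.
Proof. by rewrite /deg (bigD1 a) //= leq_addr. Qed.

Lemma deg_ge2 (V : finType) (m : V -> V -> nat) v a b :
  a != b -> m v a + m v b <= deg m v.
Proof.
move=> ab; rewrite /deg (bigD1 a) //= (bigD1 b) /=; last by rewrite eq_sym ab.
by rewrite addnA leq_addr.
Qed.

Lemma deg_ge4 (V : finType) (m : V -> V -> nat) v a b c d :
  uniq [:: a; b; c; d] -> m v a + m v b + m v c + m v d <= deg m v.
Proof.
rewrite /= !inE !negb_or => /and4P[/and3P[ab ac ad] /andP[bc bd] cd _].
rewrite /deg (bigD1 a) //= (bigD1 b) /=; last by rewrite eq_sym ab.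
rewrite (bigD1 c) /=; last by rewrite eq_sym ac eq_sym bc.
rewrite (bigD1 d) /=; last by rewrite eq_sym ad eq_sym bd eq_sym cd.
by rewrite !addnA leq_addr.
Qed.

Lemma deg_ge3 (V : finType) (m : V -> V -> nat) v a b c :
  uniq [:: a; b; c] -> m v a + m v b + m v c <= deg m v.
Proof.
rewrite /= !inE !negb_or => /and3P[/andP[ab ac] bc _].
rewrite /deg (bigD1 a) //= (bigD1 b) /=; last by rewrite eq_sym ab.
rewrite (bigD1 c) /=; last by rewrite eq_sym ac eq_sym bc.
by rewrite !addnA leq_addr.
Qed.

Lemma comp_in (V : finType) (m : V -> V -> nat) (U : {set V}) x y :
  x \in U -> y \in compIn m U x -> y \in U.
Proof.
move=> xU; rewrite inE => /connectP[p Hp ->].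
elim: p x xU Hp => [|c p IH] a aU //= /andP[Hac Hp].
apply: IH Hp; by move: Hac; rewrite /adjIn => /and3P[].
Qed.

Lemma connect_stuck (V : finType) (m : V -> V -> nat) (U : {set V}) x y :
  x \notin U -> connect (adjIn m U) x y -> y = x.
Proof.
move=> xU /connectP[[|c p] /= Hp ->] //.
by move: Hp; rewrite /adjIn (negbTE xU).
Qed.

Lemma clique_acyc (V : finType) (m : V -> V -> nat) (C : {set V}) v1 v2 v3 v4 :
  (forall x, m x x = 0) ->
  (forall u, 0 < m v1 u -> u \in [:: v2; v3; v4]) ->
  m v2 v3 = 0 -> v2 != v3 ->
  is_clique m C -> v1 \in C -> v4 \notin C -> is_acyclic m C.
Proof.
move=> m0 nb h23 n23 Hc v1C v4C; split.
  move=> x y xC yC; case: (x =P y) => [->|/eqP nxy]; first by rewrite m0.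
  by rewrite Hc.
move=> s us ss al _.
have sub : {subset s <= [:: v1; v2; v3]}.
  move=> y ys; have yC := allP al y ys.
  case: (y =P v1) => [->|/eqP ny]; first by rewrite inE eqxx.
  have := nb y; rewrite Hc // 1?eq_sym // => /(_ isT).
  rewrite !inE; case/or3P => [->|->|/eqP yv4]; rewrite ?orbT //.
  by rewrite -yv4 yC in v4C.
have v2s : v2 \in s.
  apply/negPn/negP => n2; have : {subset s <= [:: v1; v3]}.
    move=> y ys; have := sub y ys; rewrite !inE; case/or3P=> [->|/eqP yv|->];
      rewrite ?orbT //; by rewrite -yv ys in n2.
  move/(uniq_leq_size us) => /=; lia.
have v3s : v3 \in s.
  apply/negPn/negP => n3; have : {subset s <= [:: v1; v2]}.
    move=> y ys; have := sub y ys; rewrite !inE; case/or3P=> [->|->|/eqP yv];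
      rewrite ?orbT //; by rewrite -yv ys in n3.
  move/(uniq_leq_size us) => /=; lia.
by rewrite Hc // ?(allP al) in h23.
Qed.

Lemma acyc_ext (V : finType) (m : V -> V -> nat) (C : {set V}) v1 v4 :
  (forall x y, m x y = m y x) ->
  (forall u, 0 < m v4 u -> u = v1) -> (forall u, m v4 u <= 1) ->
  is_acyclic m C -> is_acyclic m (v4 |: C).
Proof.
move=> ms nb le [H1 H2]; split.
  move=> x y; rewrite !inE => /orP[/eqP->|xC] /orP[/eqP->|yC]; rewrite ?le //.
    by rewrite ms le.
  exact: H1.
move=> s us ss al cyc; case: (boolP (v4 \in s)) => v4s.
  case: (rot_to v4s) => i p Hr.
  move: cyc us ss; rewrite -(rot_cycle i) -(rot_uniq i) -(size_rot i) Hr.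
  case: p {Hr} => [|a [|b q]] //= /andP[Ha] ; rewrite rcons_path => /andP[_ Hl].
  rewrite !inE => /andP[_ /andP[naq _]] _.
  move: Hl => /andP[_ Hl]; rewrite ms in Hl.
  have e1 := nb _ Ha; have e2 := nb _ Hl.
  by move: naq (mem_last b q); rewrite e2 -e1 inE => /negP.
apply: (H2 s) => //; apply/allP => y ys; have := allP al y ys; rewrite !inE.
by case/orP => [/eqP yv|//]; rewrite -yv ys in v4s.
Qed.

Theorem mainTheorem17 (V : finType) (m : V -> V -> nat) (k : nat)
    (v1 v2 v3 v4 : V) :
  multigraph m ->
  uniq [:: v1; v2; v3; v4] ->
  0 < m v1 v2 -> 0 < m v1 v3 -> 0 < m v1 v4 ->
  m v2 v3 = 0 -> m v2 v4 = 0 -> m v3 v4 = 0 ->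
  deg m v1 = 3 -> deg m v4 = 1 ->
  (yes_instance m [set: V] k <-> yes_instance m ([set: V] :\ v4) k).
Proof.
move=> [ms m0] uq h12 h13 h14 h23 h24 h34 d1 d4.
have uq' := uq; move: uq' => /= ; rewrite !inE !negb_or.
move=> /and4P[/and3P[n12 n13 n14] /andP[n23 n24] n34 _].
have u234 : uniq [:: v2; v3; v4] by rewrite /= !inE !negb_or n23 n24 n34.
have v1nb : forall u, 0 < m v1 u -> u \in [:: v2; v3; v4].
  move=> u hu; apply/negPn/negP => nu.
  have : uniq [:: v2; v3; v4; u].
    by move: nu; rewrite /= !inE !negb_or => /and3P[a b c];
       rewrite n23 n24 n34 eq_sym a eq_sym b eq_sym c.
  move/(deg_ge4 m v1); rewrite d1; lia.
have v4nb : forall u, 0 < m v4 u -> u = v1.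
  move=> u hu; apply/eqP/negPn/negP => nu.
  have := deg_ge2 m v4 nu; rewrite d4 (ms v4 v1); lia.
have v4le : forall u, m v4 u <= 1 by move=> u; rewrite -d4 deg_ge1.
split.
  case=> X [_ [hk hX]]; exists (X :\ v4); split.
    by apply/subsetP => y; rewrite !inE => /andP[-> _].
  split; first by apply: leq_trans hk; apply: subset_leq_card; apply: subD1set.
  move=> x Hx; apply: (hered ms _ (hX x _)).
    by apply/subsetP => y; rewrite !inE; case: (y == v4); case: (y \in X).
  by move: Hx; rewrite !inE; case: (x == v4); case: (x \in X).
case=> X [sX [hk hX]]; exists X; split; first by apply/subsetP.
split=> // x.
have v4X : v4 \notin X by apply/negP => /(subsetP sX); rewrite !inE eqxx.
set Wp := [set: V] :\: X; set W := ([set: V] :\ v4) :\: X.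
have memW : forall y, (y \in W) = (y != v4) && (y \in Wp).
  by move=> y; rewrite /W /Wp !inE; case: (y \in X); case: (y == v4).
have v4Wp : v4 \in Wp by rewrite /Wp !inE v4X.
move=> xWp.
case: (boolP (v1 \in X)) => v1X.
  have E : adjIn m Wp =2 adjIn m W.
    move=> a b; rewrite /adjIn !memW.
    case: (a =P v4) => [->|/eqP na]; case: (b =P v4) => [->|/eqP nb] /=;
      rewrite ?eqxx ?na ?nb ?m0 ?andbF //=.
    - case H: (0 < m v4 b); rewrite ?andbF //.
      by rewrite (v4nb _ H) /Wp !inE v1X; case: (v4 \in X).
    - case H: (0 < m a v4); rewrite ?andbF //; rewrite ms in H.
      by rewrite (v4nb _ H) /Wp !inE v1X; case: (a \in X).
  have CE : compIn m Wp x = compIn m W x by apply/setP => y; rewrite !inE; exact: (eq_connect E x y).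
  rewrite CE; case: (x =P v4) => [xv4|/eqP xn].
    left => a b; rewrite !inE xv4.
    have v4W : v4 \notin W by rewrite memW eqxx.
    by move=> /(connect_stuck v4W) -> /(connect_stuck v4W) ->; rewrite eqxx.
  by apply: hX; rewrite memW xn.
set f := fun z => if z == v4 then v1 else z.
have v1W : v1 \in W by rewrite memW n14 /Wp !inE v1X.
have fW : forall y, y \in Wp -> f y \in W.
  by move=> y; rewrite /f; case: (y =P v4) => [//|/eqP ny]; rewrite memW ny.
have E2 : forall a b, adjIn m Wp a b -> (f a == f b) || adjIn m W (f a) (f b).
  move=> a b; rewrite /adjIn /f => /and3P[aW bW hab].
  case: (a =P v4) => [av|/eqP na].
    by subst a; rewrite (v4nb _ hab); case: (v1 == v4); rewrite eqxx.
  case: (b =P v4) => [bv|/eqP nb].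
    by subst b; rewrite ms in hab; rewrite (v4nb _ hab); case: (v1 == v4); rewrite eqxx.
  by rewrite !memW na nb aW bW hab orbT.
have E1 : forall a b, connect (adjIn m W) a b -> connect (adjIn m Wp) a b.
  apply: connect_mono => a b; rewrite /adjIn !memW.
  by case/and3P => /andP[_ ->] /andP[_ ->] ->.
have E4 : forall y, y \in Wp -> connect (adjIn m Wp) y (f y) /\ connect (adjIn m Wp) (f y) y.
  move=> y yW; rewrite /f; case: (y =P v4) => [->|_]; last by split; exact: connect0.
  have v1Wp : v1 \in Wp by rewrite !inE v1X.
  by split; apply: connect1; rewrite /adjIn v4Wp v1Wp //= ms.
have Cmem : forall y, (y \in compIn m Wp x) = (y \in Wp) && (f y \in compIn m W (f x)).
  move=> y; apply/idP/idP.
    move=> yC; have yW := comp_in xWp yC; rewrite yW inE /=.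
    by move: yC; rewrite inE; apply: connect_map.
  case/andP => yW; rewrite !inE => H.
  apply: connect_trans (proj1 (E4 x xWp)) _.
  apply: connect_trans (E1 _ _ H) (proj2 (E4 y yW)).
have hC := hX (f x) (fW x xWp).
set C0 := compIn m W (f x) in hC Cmem.
have C0W : forall y, y \in C0 -> y \in W := fun y => comp_in (fW x xWp).
case: (boolP (v1 \in C0)) => v1C.
  right; split; first exact: comp_connected.
  have Ha0 : is_acyclic m C0.
    case: hC => [Hc|[_ //]].
    apply: (clique_acyc m0 v1nb h23 n23 Hc v1C).
    by apply/negP => /C0W; rewrite memW eqxx.
  apply: (acyc_sub (C := v4 |: C0)); last exact: (acyc_ext ms v4nb v4le Ha0).
  apply/subsetP => y; rewrite Cmem !inE /f => /andP[_].
  by case: (y == v4) => //= ->; rewrite orbT.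
suff -> : compIn m Wp x = C0 by [].
apply/setP => y; rewrite Cmem /f; case: (y =P v4) => [->|/eqP ny].
  rewrite (negbTE v1C) andbF; apply/esym/negP => /C0W; by rewrite memW eqxx.
apply/idP/idP; first by case/andP.
by move=> yC; rewrite yC andbT; have := C0W y yC; rewrite memW => /andP[].
Qed.
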